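(* Let $q$ be a power of an odd prime $p$ with $q>5$, let $3\le h\le k$ be integers, let $$D_3=\Bigl\{(x_1,\ldots,x_k)\in\mathbb{F}_q^k\setminus\{0\}:\prod_{i=1}^h x_i\prod_{1\le i<j\le h}(x_i+x_j)=0\Bigr\},$$ and $n=\#D_3$. Then the minimum nonzero weight of $\mathrm{C}_{D_3}$ is $n-q^{k-1}+1$, and it is attained exactly by the codewords associated with the hyperplanes $x_i+x_j=0$ ($1\le i<j\le h$) and $x_i=0$ ($1\le i\le h$).
   Context: For a finite ordered set $D=\{P_1,\ldots,P_n\}\subseteq\mathbb{F}_q^k$, $\mathrm{C}_D=\{c_f=(f(P_1),\ldots,f(P_n)):f:\mathbb{F}_q^k\to\mathbb{F}_q\text{ linear}\}$; the codewords associated with a hyperplane through the origin are the $c_f$ with $f$ a linear form defining it. Weights are Hamming weights. *)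

(* Defs.v *)
From HB Require Import structures.
From mathcomp Require Import all_boot all_order all_algebra all_field.
Set Implicit Arguments. Unset Strict Implicit. Unset Printing Implicit Defensive.
Import GRing.Theory.
Local Open Scope ring_scope.

(* The defining set D_3 in F_q^k (row vectors, coordinates indexed 0..k-1;
   the paper's coordinates 1..h are our indices 0..h-1). *)
Definition D3 (F : finFieldType) (k h : nat) : {set 'rV[F]_k} :=
  [set x : 'rV[F]_k | (x != 0) &&
     ((\prod_(i < k | (i < h)%N) x 0 i) *
      (\prod_(i < k) \prod_(j < k | ((i < j) && (j < h))%N) (x 0 i + x 0 j))
      == 0)].

(* Hamming weight of the codeword c_f = (f(P))_{P in D}; it does not depend
   on the ordering of D. *)
Definition cw_weight (F : finFieldType) (k : nat) (D : {set 'rV[F]_k})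
  (f : 'rV[F]_k -> F) : nat :=
  #|[set P in D | f P != 0]|.

Definition defines_sum_hyperplane (F : finFieldType) (k : nat)
  (f : 'rV[F]_k -> F) (i j : 'I_k) : Prop :=
  forall x : 'rV[F]_k, f x = 0 <-> x 0 i + x 0 j = 0.

Definition defines_coord_hyperplane (F : finFieldType) (k : nat)
  (f : 'rV[F]_k -> F) (i : 'I_k) : Prop :=
  forall x : 'rV[F]_k, f x = 0 <-> x 0 i = 0.

(* Main.v *)
Require Import Defs.
From HB Require Import structures.
From mathcomp Require Import all_boot all_order all_algebra all_field.
From mathcomp Require Import ring zify.
Set Implicit Arguments. Unset Strict Implicit. Unset Printing Implicit Defensive.
Import GRing.Theory.
Local Open Scope ring_scope.

Lemma f_expand (F : finFieldType) k (f : {linear 'rV[F]_k -> F^o}) (x : 'rV[F]_k) :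
  f x = \sum_(m < k) x 0 m * f 'e_m.
Proof.
rewrite {1}(row_sum_delta x) linear_sum; apply: eq_bigr => m _.
by rewrite linearZ.
Qed.

Lemma two_neq0 (F : finFieldType) p (pprime : prime p) (podd : odd p)
  (charF : p \in [pchar F]) : (2%:R : F) != 0.
Proof.
rewrite -(dvdn_pcharf charF); apply/negP => H.
have := dvdn_leq (isT : (0 < 2)%N) H => le2.
have := prime_gt1 pprime => gt1.
have E : p = 2%N by apply/eqP; rewrite eqn_leq le2 gt1.
by rewrite E in podd.
Qed.

Lemma good_notin (F : finFieldType) k h (x : 'rV[F]_k) :
  (forall i j : 'I_k, (i < h)%N -> (j < h)%N -> x 0 i + x 0 j != 0) ->
  x \notin D3 F k h.
Proof.
move=> G; rewrite inE negb_and; apply/orP; right.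
rewrite mulf_neq0 //.
  apply/prodf_neq0 => i hi; apply/negP => /eqP E.
  by have := G i i hi hi; rewrite E addr0 eqxx.
apply/prodf_neq0 => i _; apply/prodf_neq0 => j /andP [ij jh].
by apply: G => //; apply: ltn_trans ij jh.
Qed.

Lemma in_D3_coord (F : finFieldType) k h (x : 'rV[F]_k) (i : 'I_k) :
  (i < h)%N -> x 0 i = 0 -> x != 0 -> x \in D3 F k h.
Proof.
move=> ih xi xn; rewrite inE xn /=.
by rewrite (bigD1 i) //= xi !mul0r.
Qed.

Lemma in_D3_sum (F : finFieldType) k h (x : 'rV[F]_k) (i j : 'I_k) :
  (i < j)%N -> (j < h)%N -> x 0 i + x 0 j = 0 -> x != 0 -> x \in D3 F k h.
Proof.
move=> ij jh s xn; rewrite inE xn /=.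
rewrite [X in _ * X](bigD1 i) //= [X in _ * (X * _)](bigD1 j) /=.
  by rewrite s mul0r mul0r mulr0.
by rewrite ij jh.
Qed.

Lemma ker_card (F : finFieldType) k (f : {linear 'rV[F]_k -> F^o}) (v : 'rV[F]_k) :
  f v != 0 -> (#|[set x | f x == 0%R]| * #|F| = #|F| ^ k)%N.
Proof.
move=> fv.
have [w fw] : exists w, f w = 1.
  by exists ((f v)^-1 *: v); rewrite linearZ /=; apply: mulVf.
set K := [set x | f x == 0].
pose g := fun xc : 'rV[F]_k * F => xc.1 + xc.2 *: w.
have inj : {in setX K [set: F] &, injective g}.
  move=> [x c] [y d]; rewrite !inE /= => /andP [/eqP fx _] /andP [/eqP fy _].
  rewrite /g /= => E.
  have cd : c = d.
    have := congr1 f E; rewrite !linearD !linearZ /= fx fy fw !add0r => H.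
    by have : c * 1 = d * 1 := H; rewrite !mulr1.
  by move: E; rewrite cd => /addIr ->.
have := card_in_imset inj; rewrite cardsX cardsT => <-.
suff -> : [set g x | x in setX K [set: F]] = [set: 'rV[F]_k].
  by rewrite cardsT card_mx mul1n.
apply/setP => y; rewrite inE; apply/imsetP.
exists (y - f y *: w, f y); last by rewrite /g /= subrK.
rewrite !inE /= linearB linearZ /= fw andbT.
by have -> : f y *: (1 : F^o) = f y * 1 by []; rewrite mulr1 subrr.
Qed.
Lemma count_lem (F : finFieldType) k h (f : {linear 'rV[F]_k -> F^o}) (v : 'rV[F]_k) :
  (0 < k)%N -> f v != 0 ->
  let D := D3 F k h in
  let d := #|[set P in D | f P == 0%R]| in
  [/\ (cw_weight D f + d = #|D|)%N, (d.+1 <= #|F|^k.-1)%N &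
      ((d.+1 = #|F|^k.-1)%N <-> (forall x, f x = 0 -> x != 0 -> x \in D))].
Proof.
move=> k0 fv D d.
set K := [set x | f x == 0%R].
have cK : #|K| = (#|F| ^ k.-1)%N.
  have := ker_card fv; rewrite -/K.
  have -> : (#|F| ^ k = #|F| ^ k.-1 * #|F|)%N by rewrite -expnSr prednK.
  rewrite mulnC [X in _ = X]mulnC => /eqP.
  rewrite eqn_pmul2l; first by move/eqP.
  by apply/card_gt0P; exists 0.
have K0 : (0 : 'rV[F]_k) \in K by rewrite inE linear0.
have cKD : #|K| = (#|K :\ 0|).+1 by rewrite (cardsD1 0) K0.
have sub : [set P in D | f P == 0%R] \subset K :\ 0.
  apply/subsetP => x; rewrite !inE.
  by case/andP => /andP [-> _] ->.
split.
- rewrite /cw_weight /d -(cardsID K D) [X in _ = X]addnC; congr (_ + _)%N; apply: eq_card => x;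
  by rewrite !inE // andbC.
- by rewrite -cK cKD ltnS subset_leq_card.
- rewrite -cK cKD; split.
  + move=> [] E x fx xn.
    have := subset_cardP E sub => /(_ x); rewrite !inE xn fx eqxx /=.
    by rewrite andbT => ->.
  + move=> H; congr _.+1; apply/eqP; rewrite eqn_leq subset_leq_card //=.
    apply: subset_leq_card; apply/subsetP => x; rewrite !inE.
    case/andP => xn /eqP fx; have := H x fx xn; rewrite inE => ->.
    by rewrite fx eqxx.
Qed.
Definition x3 (F : finFieldType) k (i j l : 'I_k) (u s v : F) : 'rV[F]_k :=
  const_mx 1 + (u-1) *: 'e_i + (s-1) *: 'e_j + (v-1) *: 'e_l.

Lemma x3E (F : finFieldType) k (i j l m : 'I_k) (u s v : F) :
  x3 i j l u s v 0 m =
  1 + (if i == m then u - 1 else 0) + (if j == m then s - 1 else 0)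
    + (if l == m then v - 1 else 0).
Proof.
rewrite !mxE /= ![m == _]eq_sym.
by case: (i == m); case: (j == m); case: (l == m); rewrite /= ?mulr1 ?mulr0.
Qed.

Lemma x3_vals (F : finFieldType) k (i j l m : 'I_k) (u s v : F) :
  i != j -> (v = 1 \/ (i != l /\ j != l)) ->
  [\/ x3 i j l u s v 0 m = 1, x3 i j l u s v 0 m = u,
      x3 i j l u s v 0 m = s | x3 i j l u s v 0 m = v].
Proof.
move=> ij hv; rewrite x3E.
have ji : j != i by rewrite eq_sym.
have [E1|nim] := eqVneq i m.
  rewrite -E1 (negbTE ji) /=.
  have [E|nli] := eqVneq l i.
    idtac.
    case: hv => [->|[]]; last by rewrite E eqxx.
    by apply: Or42; ring.
  by rewrite /=; apply: Or42; ring.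
rewrite /=.
have [E0|njm] := eqVneq j m.
  rewrite -E0 /=.
  have [E|nlj] := eqVneq l j.
    idtac.
    case: hv => [->|[_]]; last by rewrite E eqxx.
    by apply: Or43; ring.
  by rewrite /=; apply: Or43; ring.
rewrite /=.
have [E|nlm] := eqVneq l m.
  by rewrite /=; apply: Or44; ring.
by rewrite /=; apply: Or41; ring.
Qed.

Lemma f_x3 (F : finFieldType) k (f : {linear 'rV[F]_k -> F^o}) (i j l : 'I_k) (u s v : F) :
  f (x3 i j l u s v) = f (const_mx 1) + (u-1) * f 'e_i + (s-1) * f 'e_j + (v-1) * f 'e_l.
Proof. by rewrite /x3 !linearD !linearZ. Qed.

Lemma avoid5 (F : finType) (b1 b2 b3 b4 b5 : F) :
  (5 < #|F|)%N -> exists s, s \notin [:: b1; b2; b3; b4; b5].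
Proof.
move=> h5; case: (pickP (fun s => s \notin [:: b1; b2; b3; b4; b5])) => [s Hs|H].
  by exists s.
exfalso; have : (#|F| <= #|[:: b1; b2; b3; b4; b5]|)%N.
  apply: subset_leq_card; apply/subsetP => s _.
  by have := H s; move/negbFE.
move=> le; have := leq_trans le (card_size _); rewrite /=.
by move=> le5; move: (leq_trans h5 le5); rewrite ltnn.
Qed.

Lemma pairs_ok (F : finFieldType) (t1 t2 t3 t4 : F) :
  (2%:R : F) != 0 -> t1 != 0 -> t2 != 0 -> t3 != 0 -> t4 != 0 ->
  t1 + t2 != 0 -> t1 + t3 != 0 -> t1 + t4 != 0 ->
  t2 + t3 != 0 -> t2 + t4 != 0 -> t3 + t4 != 0 ->
  forall a b, a \in [:: t1; t2; t3; t4] -> b \in [:: t1; t2; t3; t4] -> a + b != 0.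
Proof.
move=> two n1 n2 n3 n4 s12 s13 s14 s23 s24 s34 a b.
have dbl : forall t : F, t != 0 -> t + t != 0.
  by move=> t tn; rewrite -mulr2n -mulr_natl mulf_neq0.
rewrite !inE => /or4P [] /eqP -> /or4P [] /eqP ->;
  by rewrite ?dbl // addrC.
Qed.

Lemma good4 (F : finFieldType) k h (x : 'rV[F]_k) (t1 t2 t3 t4 : F) :
  (forall m : 'I_k, [\/ x 0 m = t1, x 0 m = t2, x 0 m = t3 | x 0 m = t4]) ->
  (forall a b, a \in [:: t1; t2; t3; t4] -> b \in [:: t1; t2; t3; t4] -> a + b != 0) ->
  forall i j : 'I_k, (i < h)%N -> (j < h)%N -> x 0 i + x 0 j != 0.
Proof.
move=> V P i j _ _; apply: P.
  by case: (V i) => ->; rewrite !inE eqxx ?orbT.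
by case: (V j) => ->; rewrite !inE eqxx ?orbT.
Qed.

Lemma classify (F : finFieldType) p k h (pprime : prime p) (podd : odd p)
  (charF : p \in [pchar F]) (q_gt5 : (5 < #|F|)%N) (h_ge3 : (3 <= h)%N)
  (h_le_k : (h <= k)%N) (f : {linear 'rV[F]_k -> F^o}) (v0 : 'rV[F]_k) :
  f v0 != 0 -> (forall x, f x = 0 -> x != 0 -> x \in D3 F k h) ->
  (exists i j : 'I_k, [/\ (i < j)%N, (j < h)%N & defines_sum_hyperplane f i j]) \/
  (exists i : 'I_k, (i < h)%N /\ defines_coord_hyperplane f i).
Proof.
move=> fv HV.
have two := two_neq0 pprime podd charF.
have k0 : (0 < k)%N by apply: leq_trans h_le_k; apply: leq_trans h_ge3.
have h0 : (0 < h)%N by apply: leq_trans h_ge3.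
pose a := fun m : 'I_k => f 'e_m.
pose S := f (const_mx 1).
have contra : forall x : 'rV[F]_k, (forall i j : 'I_k, (i < h)%N -> (j < h)%N -> x 0 i + x 0 j != 0) ->
    f x != 0.
  move=> x G; apply/eqP => fx.
  have xn : x != 0.
    apply/eqP => x0; have := G (Ordinal k0) (Ordinal k0) h0 h0.
    by rewrite x0 mxE addr0 eqxx.
  by have := HV x fx xn; rewrite (negbTE (good_notin G)).
have contra3 : forall (i j l : 'I_k) (u s v : F), f (x3 i j l u s v) = 0 ->
    i != j -> (v = 1 \/ (i != l /\ j != l)) ->
    u != 0 -> s != 0 -> v != 0 -> 1 + u != 0 -> 1 + s != 0 -> 1 + v != 0 ->
    u + s != 0 -> u + v != 0 -> s + v != 0 -> False.
  move=> i j l u s v fx ij hv *; move/eqP: fx; apply/negP.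
  apply: contra; apply: (@good4 _ _ _ _ 1 u s v).
    by move=> m; apply: x3_vals.
  by apply: pairs_ok => //; apply: oner_neq0.
have fE : forall x : 'rV[F]_k, f x = \sum_(m < k) x 0 m * a m by move=> x; apply: f_expand.
case: (boolP [exists m : 'I_k, (h <= m)%N && (a m != 0)]) => [/existsP [m /andP [hm am]] | /existsPn nA].
  exfalso.
  have fx : f (x3 m m m (1 - S / a m) 1 1) = 0.
    rewrite f_x3 -/S -/(a m); field; repeat (apply/andP; split); assumption.
  suff G : forall i j : 'I_k, (i < h)%N -> (j < h)%N ->
      x3 m m m (1 - S / a m) 1 1 0 i + x3 m m m (1 - S / a m) 1 1 0 j != 0.
    by have := contra _ G; rewrite fx eqxx.
  move=> i j hi hj; rewrite !x3E.
  have nmi : (m == i) = false by apply/eqP => E; move: hi; rewrite -E ltnNge hm.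
  have nmj : (m == j) = false by apply/eqP => E; move: hj; rewrite -E ltnNge hm.
  by rewrite nmi nmj /= !addr0; apply: two.
have nA' : forall m : 'I_k, a m != 0 -> (m < h)%N.
  by move=> m am; have := nA m; rewrite am andbT -ltnNge.
case: (boolP [exists i : 'I_k, exists j : 'I_k, (a i != 0) && (a j != 0) && (a i != a j)])
  => [/existsP [i /existsP [j /andP [/andP [ai aj] aij]]] | /existsPn nB].
  exfalso.
  have ij : i != j by apply/eqP => E; move: aij; rewrite E eqxx.
  have [s sn] := avoid5 0 (-1) (1 + (a i - S) / a j) (1 + (2%:R * a i - S) / a j)
                          ((S - a i - a j) / (a i - a j)) q_gt5.
  move: sn; rewrite !inE !negb_or => /and5P [s0 s1 s3 s4 s5].
  have aij' : a i - a j != 0 by rewrite subr_eq0.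
  set u := 1 - (S + (s - 1) * a j) / a i.
  have fx : f (x3 i j i u s 1) = 0.
    rewrite f_x3 -/S -/(a i) -/(a j) /u; field; repeat (apply/andP; split); assumption.
  apply: (contra3 i j i u s 1 fx ij (or_introl erefl)).
  - have -> : u = (- a j / a i) * (s - (1 + (a i - S) / a j)) by rewrite /u; field; repeat (apply/andP; split); assumption.
    by rewrite mulf_neq0 ?subr_eq0 // mulf_neq0 ?oppr_eq0 ?invr_eq0.
  - by [].
  - exact: oner_neq0.
  - have -> : 1 + u = (- a j / a i) * (s - (1 + (2%:R * a i - S) / a j)) by rewrite /u; field; repeat (apply/andP; split); assumption.
    by rewrite mulf_neq0 ?subr_eq0 // mulf_neq0 ?oppr_eq0 ?invr_eq0.
  - by rewrite addrC addr_eq0.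
  - exact: two.
  - have -> : u + s = ((a i - a j) / a i) * (s - (S - a i - a j) / (a i - a j)) by rewrite /u; field; repeat (apply/andP; split); assumption.
    by rewrite mulf_neq0 ?subr_eq0 // mulf_neq0 ?invr_eq0.
  - have -> : u + 1 = 1 + u by rewrite addrC.
    have -> : 1 + u = (- a j / a i) * (s - (1 + (2%:R * a i - S) / a j)) by rewrite /u; field; repeat (apply/andP; split); assumption.
    by rewrite mulf_neq0 ?subr_eq0 // mulf_neq0 ?oppr_eq0 ?invr_eq0.
  - by rewrite addr_eq0.
have nB' : forall i j, a i != 0 -> a j != 0 -> a i = a j.
  move=> i j ai aj; have := nB i; move/existsPn/(_ j).
  by rewrite ai aj /= negbK => /eqP.
have [i0 ai0] : exists i0, a i0 != 0.
  case: (pickP (fun m => a m != 0)) => [i0 H|H]; first by exists i0.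
  exfalso; move: fv; rewrite fE big1 ?eqxx // => m _.
  by move: (H m) => /negbFE/eqP ->; rewrite mulr0.
have hi0 := nA' i0 ai0.
case: (boolP [exists j : 'I_k, (j != i0) && (a j != 0)]) => [/existsP [j /andP [ji0 aj]] | /existsPn nC].
  have aji0 := nB' j i0 aj ai0.
  have hj := nA' j aj.
  case: (boolP [exists l : 'I_k, (l != i0) && (l != j) && (a l != 0)])
    => [/existsP [l /andP [/andP [li0 lj] al]] | /existsPn nD].
    exfalso.
    have ali0 := nB' l i0 al ai0.
    pose r := 3%:R - S / a i0.
    have [s sn] := avoid5 0 (-1) (r / 2%:R) ((r + 1) / 2%:R) r q_gt5.
    move: sn; rewrite !inE !negb_or => /and5P [s0 s1 s3 s4 s5].
    pose v := r - 2%:R * s.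
    have fx : f (x3 i0 j l s s v) = 0.
      rewrite f_x3 -/S -/(a i0) -/(a j) -/(a l) aji0 ali0 /v /r.
      field; repeat (apply/andP; split); assumption.
    have i0j : i0 != j by rewrite eq_sym.
    have i0l : i0 != l by rewrite eq_sym.
    have jl : j != l by rewrite eq_sym.
    have ev : v = - 2%:R * (s - r / 2%:R).
      by rewrite /v; field; repeat (apply/andP; split); assumption.
    have ev1 : 1 + v = - 2%:R * (s - (r + 1) / 2%:R).
      by rewrite /v; field; repeat (apply/andP; split); assumption.
    have esv : s + v = - (s - r) by rewrite /v; field.
    have vn : v != 0 by rewrite ev mulf_neq0 ?oppr_eq0 ?subr_eq0.
    have v1n : 1 + v != 0 by rewrite ev1 mulf_neq0 ?oppr_eq0 ?subr_eq0.
    have svn : s + v != 0 by rewrite esv oppr_eq0 subr_eq0.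
    have s1n : 1 + s != 0 by rewrite addrC addr_eq0.
    have ssn : s + s != 0 by rewrite -mulr2n -mulr_natl mulf_neq0.
    exact: (contra3 i0 j l s s v fx i0j (or_intror (conj i0l jl))).
  left.
  have fx : forall x : 'rV[F]_k, f x = (x 0 i0 + x 0 j) * a i0.
    move=> x; rewrite fE (bigD1 i0) //= (bigD1 j) /=; last by rewrite ji0.
    rewrite big1 ?addr0; first by rewrite aji0 mulrDl.
    move=> m /andP [mi0 mj]; have := nD m; rewrite mi0 mj /= negbK => /eqP ->.
    by rewrite mulr0.
  have dsh : forall x : 'rV[F]_k, f x = 0 <-> x 0 i0 + x 0 j = 0.
    move=> x; rewrite fx; split; last by move=> ->; rewrite mul0r.
    by move/eqP; rewrite mulf_eq0 (negbTE ai0) orbF => /eqP.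
  case: (ltngtP i0 j) => [lt|gt|eq].
  - by exists i0, j; split.
  - exists j, i0; split => // x; rewrite addrC; exact: dsh.
  - by move: ji0; rewrite (val_inj eq) eqxx.
right; exists i0; split => // x.
have fx : f x = x 0 i0 * a i0.
  rewrite fE (bigD1 i0) //= big1 ?addr0 // => m mi0.
  by have := nC m; rewrite mi0 /= negbK => /eqP ->; rewrite mulr0.
rewrite fx; split; last by move=> ->; rewrite mul0r.
by move/eqP; rewrite mulf_eq0 (negbTE ai0) orbF => /eqP.
Qed.

Lemma e_in_D3 (F : finFieldType) k h (i : 'I_k) :
  (3 <= h)%N -> (h <= k)%N -> (i < h)%N -> ('e_i : 'rV[F]_k) \in D3 F k h.
Proof.
move=> h3 hk ih.
have [l [lh li]] : exists l : 'I_k, (l < h)%N /\ l != i.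
  have k1 : (1 < k)%N by apply: leq_trans hk; apply: leq_trans h3.
  have k0 : (0 < k)%N by apply: ltn_trans k1.
  case: (eqVneq (nat_of_ord i) 0%N) => [i0|i0].
    exists (Ordinal k1); split; first by apply: leq_trans h3.
    by apply/eqP => /(congr1 val) /=; rewrite i0.
  exists (Ordinal k0); split; first by apply: leq_trans h3.
  by apply/eqP => /(congr1 val) /= E; move: i0; rewrite -E eqxx.
apply: (in_D3_coord lh).
  by rewrite mxE /= (negbTE li).
apply/eqP => /(congr1 (fun M : 'rV[F]_k => M 0 i)); rewrite !mxE !eqxx /=.
by move/eqP; rewrite oner_eq0.
Qed.

Lemma e_ii (F : finFieldType) k (i : 'I_k) : ('e_i : 'rV[F]_k) 0 i = 1.
Proof. by rewrite mxE !eqxx. Qed.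

Theorem proposition4p2 (F : finFieldType) (p : nat) (k h : nat)
  (pprime : prime p) (podd : odd p) (charF : p \in [pchar F])
  (q_gt5 : (5 < #|F|)%N) (h_ge3 : (3 <= h)%N) (h_le_k : (h <= k)%N) :
  let n := #|D3 F k h| in
  let m := (n + 1 - #|F| ^ k.-1)%N in
  (forall f : {linear 'rV[F]_k -> F^o},
      (0 < cw_weight (D3 F k h) f)%N -> (m <= cw_weight (D3 F k h) f)%N) /\
  (forall f : {linear 'rV[F]_k -> F^o},
      ((0 < cw_weight (D3 F k h) f)%N /\ cw_weight (D3 F k h) f = m) <->
      ((exists i j : 'I_k, [/\ (i < j)%N, (j < h)%N &
                            defines_sum_hyperplane f i j]) \/
       (exists i : 'I_k, (i < h)%N /\ defines_coord_hyperplane f i))).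
Proof.
move=> n m.
have k0 : (0 < k)%N by apply: leq_trans h_le_k; apply: leq_trans h_ge3.
have zero_w : forall f : {linear 'rV[F]_k -> F^o}, (forall v, f v = 0) ->
    cw_weight (D3 F k h) f = 0%N.
  move=> f H; rewrite /cw_weight; apply/eqP; rewrite cards_eq0; apply/eqP/setP => x.
  by rewrite !inE H eqxx andbF.
split.
  move=> f wpos.
  case: (pickP (fun v => f v != 0)) => [v fv|H]; last first.
    by move: wpos; rewrite zero_w // => v; move: (H v) => /negbFE/eqP.
  have [E1 E2 _] := count_lem h k0 fv.
  rewrite /m /n -E1; move: E2; set d := #|_|; set w := cw_weight _ _; set Q := (_ ^ _)%N.
  move=> E2; lia.
move=> f; split.
  move=> [wpos wm].
  case: (pickP (fun v => f v != 0)) => [v fv|H]; last first.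
    by move: wpos; rewrite zero_w // => v; move: (H v) => /negbFE/eqP.
  have [E1 E2 E3] := count_lem h k0 fv.
  apply: (classify pprime podd charF q_gt5 h_ge3 h_le_k fv).
  apply/E3; move: wm E1 E2 wpos; rewrite /m /n; lia.
move=> L.
have [v [vD fv HV]] : exists v : 'rV[F]_k, [/\ v \in D3 F k h, f v != 0 &
    (forall x, f x = 0 -> x != 0 -> x \in D3 F k h)].
  case: L => [[i [j [ij jh dsh]]] | [i [ih dch]]].
    exists 'e_i; split.
    - by apply: e_in_D3 => //; apply: ltn_trans ij jh.
    - apply/negP => /eqP /dsh; rewrite e_ii mxE /=.
      have -> : (j == i) = false by apply/negbTE; rewrite neq_ltn ij orbT.
      by rewrite addr0 => /eqP; rewrite oner_eq0.
    - by move=> x /dsh sx xn; apply: (in_D3_sum ij jh sx xn).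
  exists 'e_i; split.
  - exact: e_in_D3.
  - by apply/negP => /eqP /dch; rewrite e_ii => /eqP; rewrite oner_eq0.
  - by move=> x /dch sx xn; apply: (in_D3_coord ih sx xn).
have [E1 E2 E3] := count_lem h k0 fv.
have E4 := proj2 E3 HV.
have wpos : (0 < cw_weight (D3 F k h) f)%N.
  by apply/card_gt0P; exists v; rewrite inE vD fv.
split => //; move: E1 E4 wpos; rewrite /m /n; lia.
Qed.
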